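(* Comparing the Data Revocation Game (partial revocation allowed) with the Forbidding Game (partial revocation forbidden) on the same parameters: there exist parameter choices and a Nash equilibrium $d^{a}$ of the allowing game and a pure Nash equilibrium $d^{f}$ of the forbidding game such that $\sum_i d^a_i>\sum_i d^f_i$; there exist parameter choices with such equilibria where $\sum_i d^a_i<\sum_i d^f_i$; and there exist parameter choices with such equilibria where $\sum_i d^a_i=\sum_i d^f_i$. Likewise, users' payoffs at $d^a$ can be higher than, lower than, or equal to those at $d^f$: there exist parameter choices with such equilibria where every user's payoff is strictly higher at $d^a$; where some user's payoff is strictly lower at $d^a$ than at $d^f$; and where every user's payoff is the same at $d^a$ and $d^f$.
   Context: Data Revocation Game (allowing partial revocation): a finite set of users $\mathcal I=\{1,\dots,I\}$, $I\ge 2$, each with parameters $d_i^{\max}>0$, $\epsilon_i>0$, $\xi_i>0$, $\ell_i>0$, $\theta_i\ge 0$; each user chooses $d_i\in[0,d_i^{\max}]$, with payoff $$U_i(d_i,\boldsymbol{d_{-i}})=\ln\Big(\sum_{j\in\mathcal I}d_j+\epsilon_i\Big)-\xi_i d_i\ell_i-\theta_i d_i\sum_{j\neq i}\Big(1-\frac{d_j}{d_j^{\max}}\Big)\ell_j^2 .$$ Forbidding Game: identical, except that each user's strategy set is $\{0,d_i^{\max}\}$. In either game, a (pure) Nash equilibrium is a profile from which no user can strictly increase its payoff by unilaterally changing to another strategy in its own strategy set. *)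

(* Defs.v *)
From Stdlib Require Import Reals Lra Lia List.
Import ListNotations.
Open Scope R_scope.

(* Users are indexed 0, ..., I-1. *)
Record Params := mkParams {
  nusers : nat;
  dmax  : nat -> R;
  eps   : nat -> R;
  xi    : nat -> R;
  ell   : nat -> R;
  theta : nat -> R }.

Definition valid_params (p : Params) : Prop :=
  (2 <= nusers p)%nat /\
  forall i, (i < nusers p)%nat ->
    0 < dmax p i /\ 0 < eps p i /\ 0 < xi p i /\ 0 < ell p i /\ 0 <= theta p i.

Definition sumU (p : Params) (f : nat -> R) : R :=
  fold_right Rplus 0 (map f (seq 0 (nusers p))).

(* A strategy profile: d i is user i's data amount (only i < I matters). *)
Definition profile := nat -> R.

Definition payoff (p : Params) (i : nat) (d : profile) : R :=
  ln (sumU p d + eps p i)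
  - xi p i * d i * ell p i
  - theta p i * d i *
      sumU p (fun j => if Nat.eq_dec j i then 0
                       else (1 - d j / dmax p j) * (ell p j) ^ 2).

Definition update (d : profile) (i : nat) (x : R) : profile :=
  fun j => if Nat.eq_dec j i then x else d j.

Definition NE_allow (p : Params) (d : profile) : Prop :=
  forall i, (i < nusers p)%nat ->
    (0 <= d i <= dmax p i) /\
    forall x, 0 <= x <= dmax p i -> payoff p i (update d i x) <= payoff p i d.

Definition NE_forbid (p : Params) (d : profile) : Prop :=
  forall i, (i < nusers p)%nat ->
    (d i = 0 \/ d i = dmax p i) /\
    forall x, (x = 0 \/ x = dmax p i) -> payoff p i (update d i x) <= payoff p i d.

(* Main.v *)
Require Import Defs.
From Stdlib Require Import Reals Lra Lia.
Open Scope R_scope.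

Lemma L1 u : 0 < u -> ln u <= u - 1.
Proof.
  intros Hu. destruct (Req_dec (ln u) 0) as [H|H].
  - assert (u = 1). { rewrite <- (exp_ln u Hu), H, exp_0. reflexivity. } lra.
  - pose proof (exp_ineq1 _ H). rewrite exp_ln in H0 by exact Hu. lra.
Qed.

Lemma L2 y y0 : 0 < y -> 0 < y0 -> ln y <= ln y0 + y / y0 - 1.
Proof.
  intros Hy Hy0. replace (ln y) with (ln y0 + ln (y / y0)).
  - pose proof (L1 (y/y0)). assert (0 < y / y0) by (apply Rdiv_lt_0_compat; lra). lra.
  - unfold Rdiv. rewrite ln_mult by (try apply Rinv_0_lt_compat; lra).
    rewrite ln_Rinv by lra. ring.
Qed.

Lemma ln9 : ln 9 <= 4.
Proof.
  assert (H2 : 1 + 2 < exp 2) by (apply exp_ineq1; lra).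
  assert (exp 4 = exp 2 * exp 2) by (rewrite <- exp_plus; f_equal; lra).
  rewrite <- (ln_exp 4). apply Rlt_le, ln_increasing; nra.
Qed.

Lemma ln3 : 1 <= ln 3.
Proof.
  rewrite <- (ln_exp 1). destruct (Rle_lt_or_eq_dec _ _ exp_le_3) as [H|H].
  - apply Rlt_le, ln_increasing; [apply exp_pos|exact H].
  - rewrite H; lra.
Qed.

Lemma ln2 : / 2 <= ln 2.
Proof.
  pose proof (L1 (/2)). rewrite ln_Rinv in H by lra. lra.
Qed.

Lemma ln23 : ln 2 < ln 3.
Proof. apply ln_increasing; lra. Qed.

Lemma ln1p x : 0 <= x -> ln (1 + x) <= x.
Proof. intros. pose proof (L1 (1+x)). lra. Qed.


Lemma K a b bv : b = bv -> 0 < a -> 0 < bv -> ln a <= ln b + a / bv - 1.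
Proof. intros -> Ha Hb. apply L2; lra. Qed.

Ltac kk bv := match goal with |- ln ?a - _ - _ <= ln ?b - _ - _ =>
  pose proof (K a b bv ltac:(first [ring|field|lra]) ltac:(lra) ltac:(lra)) end; lra.
Ltac eqln := match goal with |- ln ?a - _ - _ <= ln ?b - _ - _ =>
  replace a with b by (first [ring|lra]) end; lra.
Ltac num va vb := match goal with |- ln ?a - _ - _ <= ln ?b - _ - _ =>
  replace a with va by (first [ring|lra]); replace b with vb by (first [ring|lra]) end.

Ltac prep := intros i Hi; simpl in Hi; destruct i as [|[|i]]; [| |lia]; split; simpl; try lra;
  [intros x Hx; unfold payoff, update, sumU; simpl|intros x Hx; unfold payoff, update, sumU; simpl].

Definition pA := mkParams 2 (fun _ => 1) (fun _ => 1) (fun _ => 1) (fun _ => 1) (fun _ => 0).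
Definition d0 : profile := fun _ => 0.

Lemma vA : valid_params pA.
Proof. split; simpl. lia. intros; lra. Qed.

Lemma A_allow : NE_allow pA d0.
Proof. unfold d0; prep; kk 1. Qed.

Lemma A_forbid : NE_forbid pA d0.
Proof. unfold d0; prep; kk 1. Qed.

Definition pB := mkParams 2 (fun _ => 8) (fun _ => 1) (fun _ => /2) (fun _ => 1) (fun _ => 0).
Definition dB : profile := fun _ => /2.

Lemma vB : valid_params pB.
Proof. split; simpl. lia. intros; lra. Qed.

Lemma B_allow : NE_allow pB dB.
Proof. unfold dB; prep; kk 2. Qed.

Lemma B_forbid : NE_forbid pB d0.
Proof. unfold d0; prep; (destruct Hx as [->| ->]; [eqln| num 9 1; rewrite ln_1; pose proof ln9; lra]). Qed.

Definition pC := mkParams 2 (fun i => match i with O => 2 | _ => 1 end) (fun _ => 1)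
  (fun i => match i with O => /2 | _ => 1 end) (fun _ => 1) (fun _ => 0).
Definition dCa : profile := fun i => match i with O => 1 | _ => 0 end.
Definition dCf : profile := fun i => match i with O => 2 | _ => 0 end.

Lemma vC : valid_params pC.
Proof. split; simpl. lia. intros [|i] _; lra. Qed.

Lemma C_allow : NE_allow pC dCa.
Proof. unfold dCa; prep; kk 2. Qed.

Lemma C_forbid : NE_forbid pC dCf.
Proof. unfold dCf; prep.
  - destruct Hx as [->| ->]; [num 1 3; rewrite ln_1; pose proof ln3; lra|eqln].
  - destruct Hx as [->| ->]; [eqln|kk 3].
Qed.

Theorem proposition5 :
  (exists p da df, valid_params p /\ NE_allow p da /\ NE_forbid p df /\
     sumU p da > sumU p df) /\
  (exists p da df, valid_params p /\ NE_allow p da /\ NE_forbid p df /\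
     sumU p da < sumU p df) /\
  (exists p da df, valid_params p /\ NE_allow p da /\ NE_forbid p df /\
     sumU p da = sumU p df) /\
  (exists p da df, valid_params p /\ NE_allow p da /\ NE_forbid p df /\
     forall i, (i < nusers p)%nat -> payoff p i da > payoff p i df) /\
  (exists p da df, valid_params p /\ NE_allow p da /\ NE_forbid p df /\
     exists i, (i < nusers p)%nat /\ payoff p i da < payoff p i df) /\
  (exists p da df, valid_params p /\ NE_allow p da /\ NE_forbid p df /\
     forall i, (i < nusers p)%nat -> payoff p i da = payoff p i df).
Proof.
  split; [|split; [|split; [|split; [|split]]]].
  - exists pB, dB, d0. split; [apply vB|split; [apply B_allow|split; [apply B_forbid|]]].
    unfold sumU, dB, d0; simpl; lra.
  - exists pC, dCa, dCf. split; [apply vC|split; [apply C_allow|split; [apply C_forbid|]]].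
    unfold sumU, dCa, dCf; simpl; lra.
  - exists pA, d0, d0. split; [apply vA|split; [apply A_allow|split; [apply A_forbid|]]].
    reflexivity.
  - exists pB, dB, d0. split; [apply vB|split; [apply B_allow|split; [apply B_forbid|]]].
    intros i Hi; simpl in Hi; destruct i as [|[|i]]; [| |lia];
    unfold payoff, sumU, dB, d0; simpl;
    (replace (/2 + (/2 + 0) + 1) with 2 by lra; replace (0 + (0 + 0) + 1) with 1 by lra;
     rewrite ln_1; pose proof ln2; lra).
  - exists pC, dCa, dCf. split; [apply vC|split; [apply C_allow|split; [apply C_forbid|]]].
    exists 1%nat; split; [simpl; lia|].
    unfold payoff, sumU, dCa, dCf; simpl.
    replace (1 + (0 + 0) + 1) with 2 by lra; replace (2 + (0 + 0) + 1) with 3 by lra.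
    pose proof ln23; lra.
  - exists pA, d0, d0. split; [apply vA|split; [apply A_allow|split; [apply A_forbid|]]].
    reflexivity.
Qed.
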